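(* Let $n\ge 1$ and let $\mathcal{H}=(\mathbb{C}^3)^{\otimes n}$ with the sector projectors $\Pi_{\bm i}$ and trace-normalized projectors $\widetilde{\Pi}_{\bm i}$, $\bm i\in\{c,l\}^n$, as in the context. Define the twirling projector $\bar{\mathcal{P}}$ on linear operators $\rho$ on $\mathcal{H}$ by $\bar{\mathcal{P}}(\rho)=\sum_{\bm i\in\{c,l\}^n}\operatorname{tr}(\Pi_{\bm i}\rho)\,\widetilde{\Pi}_{\bm i}$. Then $$\bar{\mathcal{P}}=\frac{1}{|\mathbb{P}_n|}\sum_{P\in\mathbb{P}_n}\mathcal{P},$$ i.e. for every quantum state $\rho$ on $\mathcal{H}$, $\frac{1}{|\mathbb{P}_n|}\sum_{P\in\mathbb{P}_n}\mathcal{P}(\rho)=\sum_{\bm i}\operatorname{tr}(\Pi_{\bm i}\rho)\widetilde{\Pi}_{\bm i}$.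
   Context: A single qubit with leakage is the Hilbert space $\mathbb{C}^3$ with orthonormal basis $\{|0\rangle,|1\rangle,|2\rangle\}$; its computational subspace is $\operatorname{span}\{|0\rangle,|1\rangle\}$ with projector $\Pi_c=|0\rangle\langle 0|+|1\rangle\langle 1|$ and its leakage subspace is $\operatorname{span}\{|2\rangle\}$ with projector $\Pi_l=|2\rangle\langle 2|$. For $n$ qubits, $\mathcal{H}=(\mathbb{C}^3)^{\otimes n}$ and for $\bm i=(i_1,\dots,i_n)\in\{c,l\}^n$, $\Pi_{\bm i}=\bigotimes_{k=1}^n\Pi_{i_k}$ (the factor on qubit $k$ is $\Pi_c$ if $i_k=c$ and $\Pi_l$ if $i_k=l$), $\mathcal{H}_{\bm i}$ is its range, and $\widetilde{\Pi}_{\bm i}=\Pi_{\bm i}/\dim(\mathcal{H}_{\bm i})$. The single-qubit Pauli group is $\mathbb{P}=\{\pm1,\pm \mathrm{i}\}\times\{I,X,Y,Z\}$ (16 elements, $X,Y,Z$ the $2\times2$ Pauli matrices) and $\mathbb{P}_n=\mathbb{P}^{\times n}$. For $U\in\mathbb{P}$, its channel on $\mathbb{C}^3$ is $\mathcal{P}_U(\rho)=(U\oplus 1)\rho(U\oplus 1)^\dagger$, where $U\oplus 1$ acts as $U$ on $\operatorname{span}\{|0\rangle,|1\rangle\}$ and as the identity on $|2\rangle$. For $P=(P_1,\dots,P_n)\in\mathbb{P}_n$, $\mathcal{P}=\bigotimes_{k}\mathcal{P}_{P_k}$. *)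

(* Defs.v *)
From mathcomp Require Import all_boot all_order all_algebra all_field.
Set Implicit Arguments. Unset Strict Implicit. Unset Printing Implicit Defensive.
Import Order.TTheory GRing.Theory Num.Theory.
Local Open Scope ring_scope.

(* Computational basis of (C^3)^{⊗n}: a basis vector |x_1 ... x_n> is a
   function x : 'I_n -> 'I_3. *)
Definition basis (n : nat) := {ffun 'I_n -> 'I_3}.

(* Linear operators on H = (C^3)^{⊗n}, given by their matrix entries
   <x| A |y> in the computational basis. *)
Definition op (n : nat) := basis n -> basis n -> algC.

Definition opmul n (A B : op n) : op n :=
  fun x y => \sum_(z : basis n) A x z * B z y.
Definition opadj n (A : op n) : op n := fun x y => (A y x)^*.
Definition optr n (A : op n) : algC := \sum_(x : basis n) A x x.
Definition opscale n (a : algC) (A : op n) : op n := fun x y => a * A x y.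

Definition tens n (M : 'I_n -> 'M[algC]_3) : op n :=
  fun x y => \prod_(k < n) M k (x k) (y k).

(* Single-qubit Pauli matrices: 0 = I, 1 = X, 2 = Y, 3 = Z. *)
Definition pauli (a : 'I_4) : 'M[algC]_2 :=
  \matrix_(i < 2, j < 2)
    match val a with
    | 0 => (i == j)%:R
    | 1 => (i != j)%:R
    | 2 => if i == j then 0 else if (val i == 0)%N then - 'i else 'i
    | _ => if i == j then (if (val i == 0)%N then 1 else -1) else 0
    end.

(* Single-qubit Pauli group P = {±1, ±i} × {I,X,Y,Z}: an element (k, a)
   stands for the matrix i^k * pauli a (16 elements). *)
Definition Pauli1 := ('I_4 * 'I_4)%type.
Definition pauli_mat (U : Pauli1) : 'M[algC]_2 := ('i ^+ val U.1) *: pauli U.2.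

(* U ⊕ 1 on C^3 = span{|0>,|1>} ⊕ span{|2>}. *)
Definition dsum1 (U : 'M[algC]_2) : 'M[algC]_3 :=
  \matrix_(i < 3, j < 3)
    if ((val i < 2) && (val j < 2))%N then U (inord i) (inord j)
    else (i == j)%:R.

Definition Pauli (n : nat) := {ffun 'I_n -> Pauli1}.

Definition pauli_channel n (P : Pauli n) (rho : op n) : op n :=
  let V := tens (fun k => dsum1 (pauli_mat (P k))) in
  opmul (opmul V rho) (opadj V).

(* Single-qutrit projectors Π_c, Π_l. Sector labels: false = c, true = l. *)
Definition Pic : 'M[algC]_3 := \matrix_(i < 3, j < 3) ((i == j) && (val i < 2)%N)%:R.
Definition Pil : 'M[algC]_3 := \matrix_(i < 3, j < 3) ((i == j) && (val i == 2)%N)%:R.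

Definition sector (n : nat) := {ffun 'I_n -> bool}.

Definition Proj n (s : sector n) : op n :=
  tens (fun k => if s k then Pil else Pic).

(* dim H_s = 2^(number of computational factors) * 1^(number of leaked ones) *)
Definition sector_dim n (s : sector n) : nat := 2 ^ #|[set k | ~~ s k]|.

Definition ProjN n (s : sector n) : op n :=
  opscale ((sector_dim s)%:R^-1) (Proj s).

Definition twirl n (rho : op n) : op n :=
  fun x y => \sum_(s : sector n) optr (opmul (Proj s) rho) * ProjN s x y.

(* Main.v *)
Require Import Defs.
From mathcomp Require Import all_boot all_order all_algebra all_field.
From mathcomp Require Import ring.
Import GRing.Theory Num.Theory.
Local Open Scope ring_scope.

Definition pv (s i j : nat) : algC :=
  match s with
  | 0 => (i == j)%:R
  | 1 => (i != j)%:R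
  | 2 => if i == j then 0 else if (i == 0)%N then - 'i else 'i
  | _ => if i == j then (if (i == 0)%N then 1 else -1) else 0
  end.

Lemma pauliE (s : 'I_4) (i j : 'I_2) : pauli s i j = pv s i j.
Proof. by rewrite /pauli mxE; case: s => [[|[|[|[|s]]]] hs]. Qed.

Lemma dsumE (k s : 'I_4) (a c : 'I_3) :
  dsum1 (pauli_mat (k, s)) a c =
  if ((a < 2) && (c < 2))%N then 'i ^+ k * pv s a c else (a == c :> nat)%:R.
Proof.
rewrite /dsum1 mxE; case: ifP => [/andP[ha hc]|_] //.
by rewrite /pauli_mat /= mxE pauliE !inordK.
Qed.

Lemma sumi : \sum_(k < 4) 'i ^+ k = 0 :> algC.
Proof.
rewrite !big_ord_recr big_ord0 /= add0r expr0 expr1.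
have h2 : 'i ^+ 2 = -1 :> algC by exact: sqrCi.
have h3 : 'i ^+ 3 = - 'i :> algC by rewrite exprS h2 mulrN1.
rewrite h2 h3; ring.
Qed.

Lemma iconj (k : nat) : 'i ^+ k * ('i ^+ k)^* = 1 :> algC.
Proof. by rewrite -normCK normrX normCi !expr1n. Qed.
Lemma cM (x y : algC) : (x * y)^* = x^* * y^*.
Proof. exact: rmorphM. Qed.

Lemma cN (x : algC) : (- x)^* = - x^*.
Proof. exact: rmorphN. Qed.

Lemma mulii : 'i * 'i = -1 :> algC.
Proof. by rewrite -expr2 sqrCi. Qed.

Lemma site (a b c d : 'I_3) :
  16^-1 * \sum_(U : Pauli1) dsum1 (pauli_mat U) a c * (dsum1 (pauli_mat U) b d)^*
  = \sum_(be : bool) (if be then Pil else Pic) d c * (if be then Pil else Pic) a b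
       * (if be then 1 else 2^-1).
Proof.
have -> : \sum_(U : Pauli1) dsum1 (pauli_mat U) a c * (dsum1 (pauli_mat U) b d)^*
  = \sum_(k < 4) \sum_(s < 4) dsum1 (pauli_mat (k, s)) a c * (dsum1 (pauli_mat (k, s)) b d)^*.
  by rewrite pair_bigA; apply: eq_bigr => -[].
under eq_bigr => k _ do under eq_bigr => s _ do rewrite !dsumE.
rewrite big_bool /= !mxE.
case hA: ((a < 2) && (c < 2))%N; case hB: ((b < 2) && (d < 2))%N.
- under eq_bigr => k _ do under eq_bigr => s _ do rewrite cM mulrACA iconj mul1r.
  rewrite sumr_const card_ord.
  case: a hA hB => [[|[|[|?]]] ?] //; case: b => [[|[|[|?]]] ?] //;
  case: c => [[|[|[|?]]] ?] //; case: d => [[|[|[|?]]] ?] // _ _;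
  rewrite !big_ord_recr big_ord0 /= ?(cN, conjCi, rmorph1, rmorph0, mulrN, mulNr, opprK, mulii, mulr1, mul1r, mulr0, mul0r);
  by field.
- rewrite exchange_big /= big1 ?mulr0; last first.
    move=> s _; rewrite (eq_bigr (fun k : 'I_4 => 'i ^+ k * (pv s a c * ((b == d :> nat)%:R)^*))).
      by rewrite -big_distrl /= sumi mul0r.
    by move=> k _; rewrite mulrA.
  case: a hA hB => [[|[|[|?]]] ?] //; case: b => [[|[|[|?]]] ?] //;
  case: c => [[|[|[|?]]] ?] //; case: d => [[|[|[|?]]] ?] // _ _ /=; by field.
- rewrite exchange_big /= big1 ?mulr0; last first.
    move=> s _; rewrite (eq_bigr (fun k : 'I_4 => ('i ^+ k)^* * ((a == c :> nat)%:R * (pv s b d)^*))).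
      by rewrite -big_distrl /= -rmorph_sum sumi rmorph0 mul0r.
    by move=> k _; rewrite cM mulrCA.
  case: a hA hB => [[|[|[|?]]] ?] //; case: b => [[|[|[|?]]] ?] //;
  case: c => [[|[|[|?]]] ?] //; case: d => [[|[|[|?]]] ?] // _ _ /=; by field.
- rewrite !sumr_const !card_ord.
  case: a hA hB => [[|[|[|?]]] ?] //; case: b => [[|[|[|?]]] ?] //;
  case: c => [[|[|[|?]]] ?] //; case: d => [[|[|[|?]]] ?] // _ _ /=;
  rewrite ?(rmorph1, rmorph0); by field.
Qed.
Lemma cP n (f : 'I_n -> algC) : (\prod_(k < n) f k)^* = \prod_(k < n) (f k)^*.
Proof. exact: rmorph_prod. Qed.

Lemma chanE n (P : Pauli n) rho (x y : basis n) :
  pauli_channel P rho x y = \sum_(z : basis n) \sum_(w : basis n) rho z w *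
    \prod_(k < n) (dsum1 (pauli_mat (P k)) (x k) (z k) * (dsum1 (pauli_mat (P k)) (y k) (w k))^*).
Proof.
rewrite /pauli_channel /opmul /opadj /tens.
under eq_bigr => w _ do rewrite big_distrl /=.
rewrite exchange_big /=; apply: eq_bigr => z _; apply: eq_bigr => w _.
by rewrite cP big_split /= mulrAC mulrC.
Qed.

Lemma dimE n (s : sector n) :
  ((sector_dim s)%:R : algC)^-1 = \prod_(k < n) (if s k then 1 else 2^-1).
Proof.
rewrite /sector_dim natrX -exprVn (bigID (fun k => s k)) /= big1; last by move=> k ->.
rewrite mul1r (eq_bigr (fun _ => 2^-1)); last by move=> k /negbTE ->.
rewrite (eq_bigl (fun k => k \in [set k | ~~ s k])); last by move=> k; rewrite inE.
by rewrite prodr_const.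
Qed.

Lemma twirlE n rho (x y : basis n) :
  twirl rho x y = \sum_(z : basis n) \sum_(w : basis n) rho z w *
    \sum_(s : sector n) \prod_(k < n) ((if s k then Pil else Pic) (w k) (z k) *
       (if s k then Pil else Pic) (x k) (y k) * (if s k then 1 else 2^-1)).
Proof.
rewrite /twirl /optr /opmul /ProjN /opscale.
transitivity (\sum_(s : sector n) \sum_(u : basis n) \sum_(v : basis n)
   (Proj s u v * rho v u * ((sector_dim s)%:R^-1 * Proj s x y))).
  apply: eq_bigr => s _; rewrite big_distrl /=; apply: eq_bigr => u _.
  by rewrite big_distrl.
rewrite exchange_big /=.
under eq_bigr => u _ do rewrite exchange_big /=.
rewrite exchange_big /=.
apply: eq_bigr => z _; apply: eq_bigr => w _; rewrite mulr_sumr; apply: eq_bigr => s _.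
rewrite dimE /Proj /tens !big_split /=; ring.
Qed.

Theorem lemma1 (n : nat) (hn : (1 <= n)%N) (rho : op n) (x y : basis n) :
  (#|{: Pauli n}|%:R)^-1 * (\sum_(P : Pauli n) pauli_channel P rho x y)
  = twirl rho x y.
Proof.
have -> : #|{: Pauli n}| = (16 ^ n)%N by rewrite card_ffun card_prod !card_ord.
have e16 : (((16 ^ n)%N)%:R : algC)^-1 = \prod_(k < n) (16 : algC)^-1.
  by rewrite prodr_const card_ord natrX exprVn.
rewrite e16 twirlE.
have -> : \sum_(P : Pauli n) pauli_channel P rho x y =
   \sum_(z : basis n) \sum_(w : basis n) rho z w * \sum_(P : Pauli n)
    \prod_(k < n) (dsum1 (pauli_mat (P k)) (x k) (z k) * (dsum1 (pauli_mat (P k)) (y k) (w k))^*).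
  rewrite (eq_bigr _ (fun (P : Pauli n) _ => chanE n P rho x y)) exchange_big /=.
  apply: eq_bigr => z _; rewrite exchange_big /=; apply: eq_bigr => w _.
  by rewrite mulr_sumr.
rewrite mulr_sumr; apply: eq_bigr => z _; rewrite mulr_sumr; apply: eq_bigr => w _.
rewrite mulrCA; congr (rho z w * _).
rewrite -(bigA_distr_bigA (fun (k : 'I_n) (U : Pauli1) =>
   dsum1 (pauli_mat U) (x k) (z k) * (dsum1 (pauli_mat U) (y k) (w k))^*)).
rewrite -(bigA_distr_bigA (fun (k : 'I_n) (be : bool) =>
   (if be then Pil else Pic) (w k) (z k) * (if be then Pil else Pic) (x k) (y k)
     * (if be then 1 else 2^-1))).
rewrite -big_split /=; apply: eq_bigr => k _.
exact: site.
Qed.
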